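(* Let $a_1,\dots,a_n$ be positive integers, not both $n=1$ and $a_1=1$, and let $[a_1,\dots,a_n]=p/q$ with $p,q$ relatively prime positive integers. Then \[ [a_1,\dots,a_{n-1},a_n+1,a_n-1,a_{n-1},\dots,a_1]=\frac{p^2}{pq+(-1)^n}. \]
   Context: $[b_1,\dots,b_k]=b_1+\cfrac{1}{b_2+\cfrac{1}{\ddots+\cfrac{1}{b_k}}}$ denotes a continued fraction. An entry $0$ in the interior of a continued fraction is interpreted via $[\dots,a,0,b,\dots]=[\dots,a+b,\dots]$ (this occurs when $a_n=1$). *)

(* Defs.v *)
From mathcomp Require Import all_boot all_algebra.
Set Implicit Arguments. Unset Strict Implicit. Unset Printing Implicit Defensive.
Import GRing.Theory Num.Theory.
Local Open Scope ring_scope.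

(* An interior entry 0 is handled by
   plain field arithmetic: a + 1/(0 + 1/y) = a + y, which is exactly the
   convention [.., a, 0, b, ..] = [.., a + b, ..] of the paper. *)
Fixpoint cf (s : seq rat) : rat :=
  match s with
  | [::] => 0
  | [:: x] => x
  | x :: t => x + (cf t)^-1
  end.

(* Main.v *)
Require Import Defs.
From mathcomp Require Import all_boot all_order all_algebra.
From mathcomp Require Import ring.
Import Order.TTheory GRing.Theory Num.Theory.
Local Open Scope ring_scope.

Record mat := Mat { m00 : rat; m01 : rat; m10 : rat; m11 : rat }.
Definition mmul (M N : mat) : mat :=
  Mat (m00 M * m00 N + m01 M * m10 N) (m00 M * m01 N + m01 M * m11 N)
      (m10 M * m00 N + m11 M * m10 N) (m10 M * m01 N + m11 M * m11 N).
Definition mI := Mat 1 0 0 1.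
Definition mA (x : rat) := Mat x 1 1 0.
Definition mtr (M : mat) := Mat (m00 M) (m10 M) (m01 M) (m11 M).
Definition mdet (M : mat) := m00 M * m11 M - m01 M * m10 M.
Definition Mof (s : seq rat) := foldr (fun x M => mmul (mA x) M) mI s.

Lemma mmulA M N L : mmul (mmul M N) L = mmul M (mmul N L).
Proof. case: M N L => [a b c d] [e f g h] [i j k l]; rewrite /mmul /=; f_equal; ring. Qed.
Lemma mmul1 M : mmul mI M = M.
Proof. case: M => [a b c d]; rewrite /mmul /=; f_equal; ring. Qed.
Lemma mmulI M : mmul M mI = M.
Proof. case: M => [a b c d]; rewrite /mmul /=; f_equal; ring. Qed.

Lemma Mof_cat u v : Mof (u ++ v) = mmul (Mof u) (Mof v).
Proof. elim: u => [|x u IH] /=; first by rewrite mmul1. by rewrite IH mmulA. Qed.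

Lemma Mof_rev s : Mof (rev s) = mtr (Mof s).
Proof.
elim: s => [|x s IH]; first by rewrite /= /mtr.
rewrite rev_cons -cats1 Mof_cat IH /= mmulI.
case: (Mof s) => a b c d; rewrite /mmul /mtr /=; f_equal; ring.
Qed.

Lemma mdetM M N : mdet (mmul M N) = mdet M * mdet N.
Proof. case: M N => [a b c d] [e f g h]; rewrite /mdet /mmul /=; ring. Qed.

Lemma Mof_det s : mdet (Mof s) = (-1) ^+ size s.
Proof.
elim: s => [|x s IH] /=; first by rewrite /mdet /=; ring.
by rewrite mdetM IH exprS /mdet /=; ring.
Qed.

Fixpoint good (s : seq rat) : Prop :=
  match s with
  | [::] => True
  | x :: u => 0 <= x /\ (x = 0 -> u <> [::]) /\ good u
  end.

Lemma good_cat u v : good u -> good v -> good (u ++ v).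
Proof.
elim: u => [|x u IH] //= [h1 [h2 h3]] hv; split => //; split; last exact: IH.
by move=> /h2; case: u {IH h2 h3}.
Qed.

Lemma good_pos s : good s ->
  [/\ 0 < m00 (Mof s), 0 <= m01 (Mof s), 0 <= m10 (Mof s), 0 <= m11 (Mof s)
   & s <> [::] -> 0 < m10 (Mof s)].
Proof.
elim: s => [|x u IH] /=; first by split => //; rewrite ?ler01 ?ltr01.
move=> [h1 [h2 /IH [p1 p2 p3 p4 p5]]]; rewrite /mmul /=.
have xp : 0 <= x * m00 (Mof u) by apply: mulr_ge0 => //; apply: ltW.
have xp2 : 0 <= x * m01 (Mof u) by apply: mulr_ge0.
split.
- have [x0|xn0] := eqVneq x 0.
    by rewrite x0 mul0r add0r mul1r; apply: p5; apply: h2.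
  rewrite mul1r; apply: ltr_pwDl => //; apply: mulr_gt0 => //.
  by rewrite lt_def xn0 h1.
- by rewrite mul1r; apply: addr_ge0.
- by rewrite mul1r mul0r addr0; apply: ltW.
- by rewrite mul1r mul0r addr0.
- by rewrite mul1r mul0r addr0.
Qed.

Lemma cf_Mof s : good s -> cf s = m00 (Mof s) / m10 (Mof s).
Proof.
elim: s => [|x u IH] /=; first by rewrite invr0 mulr0.
move=> [h1 [h2 hu]].
have [p1 _ _ _ _] := good_pos _ hu.
destruct u as [|y v].
  by rewrite /mmul /=; field.
rewrite IH // invf_div /mmul /= !mul0r !mul1r !addr0.
field; move: p1; rewrite /= mul1r; apply: lt0r_neq0.
Qed.
Lemma Mof_nat (l : seq nat) : exists e f g h : nat,
  Mof [seq x%:R | x <- l] = Mat e%:R f%:R g%:R h%:R.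
Proof.
elim: l => [|x l [e [f [g [h IH]]]]] /=; first by exists 1%N, 0%N, 0%N, 1%N.
rewrite IH /mmul /=.
exists (x * e + g)%N, (x * f + h)%N, e, f.
by rewrite !natrD !natrM !mul1r !mul0r !addr0.
Qed.

Lemma good_map (f : nat -> nat) l : (forall i, i \in l -> 0 < f i)%N ->
  good [seq (f i)%:R | i <- l].
Proof.
elim: l => [|x l IH] //= H; split; first by apply: ler0n.
split; last by apply: IH => i hi; apply: H; rewrite inE hi orbT.
move=> /eqP; rewrite pnatr_eq0 => /eqP h0.
by have := H x; rewrite inE eqxx h0 /= => /(_ isT).
Qed.
Theorem theorem3p18 (n : nat) (a : nat -> nat) (p q : nat) :
  (0 < n)%N ->
  (forall i, (0 < i <= n)%N -> (0 < a i)%N) ->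
  ~ (n = 1%N /\ a 1%N = 1%N) ->
  coprime p q -> (0 < p)%N -> (0 < q)%N ->
  cf [seq (a i)%:R | i <- iota 1 n] = p%:R / q%:R ->
  cf ([seq (a i)%:R | i <- iota 1 n.-1]
      ++ [:: (a n)%:R + 1; (a n)%:R - 1]
      ++ [seq (a i)%:R | i <- rev (iota 1 n.-1)])
  = (p ^ 2)%:R / (p%:R * q%:R + (-1) ^+ n).
Proof.
move=> n0 apos n1 cop p0 q0.
set L := [seq (a i)%:R | i <- iota 1 n.-1] : seq rat.
have iotaE : iota 1 n = iota 1 n.-1 ++ [:: n].
  have -> : iota 1 n = iota 1 (n.-1 + 1) by rewrite addn1 prednK.
  by rewrite iotaD add1n prednK.
have gL : good L.
  apply: good_map => i; rewrite mem_iota => /andP [i1 i2]; apply: apos.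
  by rewrite i1 /=; rewrite -ltnS -add1n -(prednK n0) add1n ltnS ltnW // -add1n.
have an0 : (0 < a n)%N by apply: apos; rewrite n0 leqnn.
have [e [f [g [h HE]]]] := Mof_nat [seq a i | i <- iota 1 n.-1].
rewrite -map_comp in HE.
have HE' : Mof L = Mat e%:R f%:R g%:R h%:R by rewrite -HE.
have Hdet : e%:R * h%:R - f%:R * g%:R = (-1) ^+ n.-1 :> rat.
  by have := Mof_det L; rewrite HE' /mdet /= size_map size_iota.
set s := [seq (a i)%:R | i <- iota 1 n] : seq rat.
have sE : s = L ++ [:: (a n)%:R] by rewrite /s iotaE map_cat.
have gs : good s.
  rewrite sE; apply: good_cat => //=; split; first by apply: ler0n.
  by split => // /eqP; rewrite pnatr_eq0 => /eqP h0; rewrite h0 in an0.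
have Ms : Mof s = mmul (Mof L) (mmul (mA (a n)%:R) mI) by rewrite sE Mof_cat.
rewrite HE' /mmul /= in Ms.
set P := (e * a n + f)%N; set Q := (g * a n + h)%N.
have m00s : m00 (Mof s) = P%:R by rewrite Ms /= natrD natrM; ring.
have m10s : m10 (Mof s) = Q%:R by rewrite Ms /= natrD natrM; ring.
have m01s : m01 (Mof s) = e%:R by rewrite Ms /=; ring.
have m11s : m11 (Mof s) = g%:R by rewrite Ms /=; ring.
have [_ _ _ _ Qp] := good_pos _ gs.
have Q0 : (0 < Q)%N.
  rewrite -(ltr0n rat) -m10s; apply: Qp; rewrite sE; by case: L {HE' Hdet gL sE Ms}.
have detS : P%:R * g%:R - e%:R * Q%:R = (-1) ^+ n :> rat.
  by have := Mof_det s; rewrite /mdet m00s m10s m01s m11s /s size_map size_iota.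
have copPQ : coprime P Q.
  rewrite /coprime -dvdn1.
  have d1 := dvdn_gcdl P Q; have d2 := dvdn_gcdr P Q.
  have dA : (gcdn P Q %| P * g)%N by apply: dvdn_mulr.
  have dB : (gcdn P Q %| e * Q)%N by apply: dvdn_mull.
  move: detS; rewrite -signr_odd; case: (odd n) => /= detS.
  - have : (e * Q = P * g + 1)%N.
      apply/eqP; rewrite -(eqr_nat rat) natrD !natrM; apply/eqP.
      have -> : e%:R * Q%:R = P%:R * g%:R - (P%:R * g%:R - e%:R * Q%:R) :> rat by ring.
      by rewrite detS expr1; ring.
    by move=> E; move: dB; rewrite E dvdn_addr.
  - have : (P * g = e * Q + 1)%N.
      apply/eqP; rewrite -(eqr_nat rat) natrD !natrM; apply/eqP.
      have -> : P%:R * g%:R = (P%:R * g%:R - e%:R * Q%:R) + e%:R * Q%:R :> rat by ring.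
      by rewrite detS expr0 addrC.
    by move=> E; move: dA; rewrite E dvdn_addr.
move=> Hcf.
have cfs : cf s = P%:R / Q%:R by rewrite cf_Mof // m00s m10s.
have cross : (P * q = p * Q)%N.
  apply/eqP; rewrite -(eqr_nat rat) !natrM.
  move: Hcf; rewrite cfs => /eqP; rewrite eqr_div ?pnatr_eq0 -?lt0n //.
have P0 : (0 < P)%N.
  rewrite lt0n; apply/eqP => P00; have : (0 < p * Q)%N by rewrite muln_gt0 p0 Q0.
  by rewrite -cross P00.
have Pp : P = p.
  apply/eqP; rewrite eqn_dvd; apply/andP; split.
    by rewrite -(Gauss_dvdr _ copPQ) mulnC -cross dvdn_mulr.
  by rewrite -(Gauss_dvdl _ cop) cross dvdn_mulr.
have Qq : Q = q.
  by apply/eqP; rewrite -(eqn_pmul2l p0) -cross Pp.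
have gR : good [seq (a i)%:R | i <- rev (iota 1 n.-1)].
  apply: good_map => i; rewrite mem_rev mem_iota => /andP [i1 i2]; apply: apos.
  by rewrite i1 /=; rewrite -ltnS -add1n -(prednK n0) add1n ltnS ltnW // -add1n.
have gt : good (L ++ [:: (a n)%:R + 1; (a n)%:R - 1]
      ++ [seq (a i)%:R | i <- rev (iota 1 n.-1)]).
  apply: good_cat => //=; split.
    by apply: addr_ge0; [apply: ler0n | apply: ler01].
  split => //; split.
    by rewrite subr_ge0 ler1n.
  split => //.
  move=> /eqP; rewrite subr_eq0 (_ : (1 : rat) = (1%N)%:R) // eqr_nat => /eqP a1.
  have [n_1|n_gt1] := eqVneq n 1%N.
    by exfalso; apply: n1; split => //; rewrite n_1 in a1.
  case E: n.-1 => [|k].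
    by move: n_gt1; rewrite -(prednK n0) E.
  by rewrite map_rev => /(congr1 size); rewrite size_rev size_map size_iota.
rewrite cf_Mof // map_rev -/L !Mof_cat Mof_rev HE'.
rewrite [Mof (_ :: _)]/= /mmul /mtr /=.
rewrite -Pp -Qq /P /Q natrX natrD !natrM.
have sgn : (-1)^+n = - (e%:R*h%:R - f%:R*g%:R) :> rat.
  by rewrite Hdet -{1}(prednK n0) exprS mulN1r.
rewrite sgn; congr (_ / _); ring.
Qed.
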